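(* Let $\Gamma$ be a connected web with a natural coloring $c:E(\Gamma)\to\mathbb{Z}_3$. For any $i\in\mathbb{Z}_3$, let $M$ be the one manifold which is the closure of the complement in $\Gamma$ of the edges $e$ with $c(e)=i$. Then $S^2-M$ consists of a connected planar surface $P$ with $\partial P=M$ together with a collection of disks.
   Context: A web is an oriented graph in $S^2$ with trivalent vertices each a source or a sink. Natural coloring: label one face $f$ of $S^2-\Gamma$ by $0$ and each other face $f'$ by the algebraic intersection number mod $3$ of an arc from the interior of $f$ to the interior of $f'$, transverse to the edges and missing the vertices, with the oriented edges of $\Gamma$ (well defined since $\Gamma$ is a $\mathbb{Z}_3$-cycle). Then color edges between faces labeled $0$ and $1$ by $1$, between faces labeled $1$ and $2$ by $2$, and between faces labeled $2$ and $0$ by $0$. This yields a $3$-edge coloring. *)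

(* Defs.v *)
(* Webs in S^2 are modelled as combinatorial maps
   (rotation systems) of genus 0. *)
From mathcomp Require Import all_boot all_algebra.
Set Implicit Arguments. Unset Strict Implicit. Unset Printing Implicit Defensive.
Import GRing.Theory.
Local Open Scope ring_scope.

(* Darts (half-edges) D.  alpha d = the other half of the edge of d;
   sigma d = next dart counterclockwise around the vertex of d.
   Vertices = sigma-orbits, edges = alpha-orbits, faces = orbits of
   face_perm = sigma \o alpha; the face of d (the phi-orbit of d) is the
   face on the right of d (d pointing away from its vertex).
   o d = true iff the edge of d is oriented away from the vertex of d. *)
Definition face_perm (D : finType) (alpha sigma : D -> D) : D -> D :=
  fun d => sigma (alpha d).

Definition map_rel (D : finType) (alpha sigma : D -> D) : rel D :=
  fun x y => (y == alpha x) || (y == sigma x).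

Definition connected_web (D : finType) (alpha sigma : D -> D) (o : D -> bool)
  : Prop :=
  [/\ injective sigma,
      (forall d, alpha (alpha d) = d) /\ (forall d, alpha d != d),
      (forall d, order sigma d = 3%N),
      (* oriented edges; every vertex is a source or a sink *)
      (forall d, o (alpha d) = ~~ o d) /\ (forall d, o (sigma d) = o d) &
      (* connected, and the surface of the map is the sphere:
         V - E + F = 2 *)
      (forall d d', connect (map_rel alpha sigma) d d') /\
      (fcard sigma (predT : pred D) + fcard (face_perm alpha sigma) (predT : pred D)
         = #|D|./2 + 2)%N ].

Definition sgn3 (b : bool) : 'Z_3 := if b then 1 else -1.

(* lab d = label of the face on the right of d.  Labels are constant on
   faces, some face is labelled 0, and crossing the edge of d from its
   left face to its right face changes the label by the algebraic
   intersection number (+1 if the edge is oriented along d, -1 otherwise). *)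
Definition natural_labeling (D : finType) (alpha sigma : D -> D) (o : D -> bool)
  (lab : D -> 'Z_3) : Prop :=
  [/\ (forall d, lab (face_perm alpha sigma d) = lab d),
      (forall d, lab d - lab (alpha d) = sgn3 (o d)) &
      exists d0, lab d0 = 0 ].

(* Natural edge coloring: edge between faces labelled a and a+1 gets color
   a+1 (0|1 -> 1, 1|2 -> 2, 2|0 -> 0). *)
Definition edge_color (D : finType) (alpha : D -> D) (lab : D -> 'Z_3) (d : D)
  : 'Z_3 :=
  if lab (alpha d) == lab d + 1 then lab (alpha d) else lab d.

(* Regions of S^2 - M, M = union of the closed edges of color <> i:
   faces glued across the (open) edges of color i. *)
Definition region_rel (D : finType) (alpha sigma : D -> D) (lab : D -> 'Z_3)
  (i : 'Z_3) : rel D :=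
  fun x y => (y == face_perm alpha sigma x) ||
             ((y == alpha x) && (edge_color alpha lab x == i)).

(* Circles of the 1-manifold M: darts of color <> i, joined along edges and
   through vertices (each vertex has exactly two darts of color <> i). *)
Definition circle_rel (D : finType) (alpha sigma : D -> D) (lab : D -> 'Z_3)
  (i : 'Z_3) : rel D :=
  fun x y => [&& edge_color alpha lab x != i, edge_color alpha lab y != i &
              [|| y == alpha x, y == sigma x | y == sigma (sigma x)]].

(* Main.v *)
Require Import Defs.
From mathcomp Require Import all_boot all_algebra.
Import GRing.Theory.
Local Open Scope ring_scope.
Definition ecol (a b : 'Z_3) := if b == a + 1 then b else a.
Lemma Z1 (a : 'Z_3) b : ecol a (a - sgn3 b) == ecol (a - sgn3 b) a.
Proof. by case: b; case: a => [[|[|[|?]]] Ha]. Qed.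
Lemma Z2 (a i : 'Z_3) b : a != i + 1 -> a - sgn3 b != i + 1 -> ecol a (a - sgn3 b) == i.
Proof. by case: b; case: a => [[|[|[|?]]] Ha]; case: i => [[|[|[|?]]] Hi]. Qed.
Lemma Z3 (a i : 'Z_3) b : a == i + 1 -> ecol a (a - sgn3 b) != i.
Proof. by case: b; case: a => [[|[|[|?]]] Ha]; case: i => [[|[|[|?]]] Hi]. Qed.
Lemma Z4 (a : 'Z_3) b : a - sgn3 b != a.
Proof. by case: b; case: a => [[|[|[|?]]] Ha]. Qed.
Lemma Z5 (a i : 'Z_3) b : a != i + 1 -> a - sgn3 b == i + 1 ->
  (a - sgn3 b - sgn3 b != i + 1) && (ecol a (a - sgn3 b - sgn3 b) == i).
Proof. by case: b; case: a => [[|[|[|?]]] Ha]; case: i => [[|[|[|?]]] Hi]. Qed.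

Theorem mainTheorem11 (D : finType) (alpha sigma : D -> D) (o : D -> bool)
  (lab : D -> 'Z_3) (i : 'Z_3) :
  connected_web alpha sigma o ->
  natural_labeling alpha sigma o lab ->
  let reg := region_rel alpha sigma lab i in
  let circ := circle_rel alpha sigma lab i in
  let c := edge_color alpha lab in
  exists d0 : D,
    (forall d, c d != i -> exists2 e, connect circ d e & connect reg d0 e) /\
    (forall d, ~~ connect reg d0 d ->
       (exists e, c e != i /\ connect reg d e) /\
       (forall e1 e2, c e1 != i -> c e2 != i ->
          connect reg d e1 -> connect reg d e2 -> connect circ e1 e2)).
Proof.
move=> [sinj [aa an] ord3 [oa os] [conn _]] [labphi labalpha [x0 _]] reg circ c.
set phi := face_perm alpha sigma.
have labA d : lab (alpha d) = lab d - sgn3 (o d).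
  by rewrite -(labalpha d) opprB addrC subrK.
have labS d : lab (sigma d) = lab d - sgn3 (o d).
  by rewrite -labA -(labphi (alpha d)) /phi /face_perm aa.
have labP d : lab (phi d) = lab d := labphi d.
have cE d : c d = ecol (lab d) (lab (alpha d)) by [].
have cA d : c (alpha d) = c d.
  by rewrite !cE aa labA (eqP (Z1 _ _)).
have phiinj : injective phi.
  by move=> a b /sinj; apply: (can_inj aa).
have regsym a b : connect reg a b -> connect reg b a.
  move=> hab; have := connect_sub (e := reg) (e' := [rel x y | reg y x]) _ hab.
  rewrite connect_rev; apply=> y z /= /orP[/eqP -> | /andP[/eqP -> hc]].
    rewrite connect_rev /=.
    have : fconnect phi (phi y) y by rewrite fconnect_sym // fconnect1.
    by apply: connect_sub => u v /eqP <-; apply: connect1; rewrite /reg /region_rel eqxx.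
  by rewrite connect_rev /=; apply: connect1; rewrite /reg /region_rel aa eqxx -/c cA hc orbT.
have regphi a : connect reg a (phi a).
  by apply: connect1; rewrite /reg /region_rel eqxx.
have regA a : c a = i -> connect reg a (alpha a).
  by move=> h; apply: connect1; rewrite /reg /region_rel -/c h !eqxx orbT.
pose rep z := if lab z == i + 1 then alpha z else z.
have repgood z : lab (rep z) != i + 1.
  rewrite /rep; case: ifP => [/eqP h | /negbT //]; rewrite labA -h; exact: Z4.
have good2 a : lab a != i + 1 -> lab (alpha a) != i + 1 -> c a = i.
  by move=> h1; rewrite cE labA => h2; apply/eqP; apply: Z2.
have step z z' : map_rel alpha sigma z z' -> connect reg (rep z) (rep z').
  rewrite /map_rel => /orP[/eqP -> | /eqP ->].
    rewrite /rep; case: ifP => [/eqP hz | /negbT hz].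
      case: ifP => [/eqP h|_]; last exact: connect0.
      by move: (Z4 (lab z) (o z)); rewrite -labA h hz eqxx.
    case: ifP => [_|/negbT hz']; first by rewrite aa.
    exact/regA/good2.
  rewrite /rep; case: ifP => [/eqP hz | /negbT hz].
    have -> : sigma z = phi (alpha z) by rewrite /phi /face_perm aa.
    rewrite labP; case: ifP => [/eqP hh|_]; last exact: regphi.
    by move: (Z4 (lab z) (o z)); rewrite -labA hh hz eqxx.
  case: ifP => [/eqP hs | /negbT hs].
    have hs' : lab z - sgn3 (o z) == i + 1 by rewrite -labS hs.
    case/andP: (@Z5 _ _ _ hz hs') => h1 h2.
    have ls2 : lab (sigma (sigma z)) = lab z - sgn3 (o z) - sgn3 (o z).
      by rewrite labS labS os.
    have E : phi (alpha (sigma (sigma z))) = z.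
      by rewrite /phi /face_perm aa; have := iter_order sinj z; rewrite ord3.
    have L : lab (alpha (sigma (sigma z))) = lab z by rewrite -{2}E labP.
    have e1 : connect reg z (alpha (sigma (sigma z))).
      apply: regsym.
      by have := regphi (alpha (sigma (sigma z))); rewrite E.
    apply: (connect_trans e1); apply: (connect_trans (regA _ _)).
      by rewrite cE aa L ls2; apply/eqP.
    rewrite aa; apply: regsym.
    have -> : sigma (sigma z) = phi (alpha (sigma z)) by rewrite /phi /face_perm aa.
    exact: regphi.
  apply: (connect_trans (regA _ _)); last first.
    have -> : sigma z = phi (alpha z) by rewrite /phi /face_perm aa.
    exact: regphi.
  by apply: good2 => //; rewrite labA -labS.
have main a b : lab a != i + 1 -> lab b != i + 1 -> connect reg a b.
  move=> ha hb; have ra : rep a = a by rewrite /rep (negbTE ha).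
  have rb : rep b = b by rewrite /rep (negbTE hb).
  rewrite -ra -rb; case/connectP: (conn a b) => p pp ->.
  elim: p a pp {ra ha} => [|y p IH] a //= /andP[hy pp].
  exact: (connect_trans (step _ _ hy) (IH _ pp)).
exists (rep x0); split.
  move=> d hd; case: (boolP (lab d == i + 1)) => [hl|hl].
    exists (alpha d); last by apply: main; rewrite ?repgood // labA -(eqP hl) Z4.
    by apply: connect1; rewrite /circ /circle_rel -/c cA hd eqxx.
  by exists d => //; apply: main; rewrite ?repgood.
move=> d hd.
have hl : lab d == i + 1.
  by apply: contraNT hd => h; apply: main; rewrite ?repgood.
have cbad a : lab a == i + 1 -> c a != i by move=> h; rewrite cE labA; apply: Z3.
have inv e : connect reg d e -> (lab e == i + 1) && connect circ d e.
  case/connectP=> p pp ->; elim/last_ind: p pp => [|p y IH]; first by rewrite hl connect0.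
  rewrite rcons_path last_rcons => /andP[pp hy]; case/andP: (IH pp) => h1 h2.
  set z := last d p in h1 h2 hy.
  case/orP: hy => [/eqP ->|/andP[_ hc]]; last by move: (cbad _ h1); rewrite hc.
  rewrite labP h1 /=; apply: (connect_trans h2).
  apply: (connect_trans (y := alpha z)); apply: connect1;
    rewrite /circ /circle_rel -/c ?cA ?cbad // ?eqxx ?orbT //.
  by rewrite -/phi labP.
split; first by exists d; split; rewrite ?cbad ?connect0.
move=> e1 e2 _ _ /inv/andP[_ h1] /inv/andP[_ h2].
have csym : connect_sym circ.
  apply: sym_connect_sym => u v; rewrite /circ /circle_rel.
  have s3 w : sigma (sigma (sigma w)) = w by have := iter_order sinj w; rewrite ord3.
  apply/idP/idP => /and3P[hu hv]; rewrite hu hv /=; case/or3P => /eqP ->; rewrite ?aa ?s3 ?eqxx ?orbT //.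
by apply: connect_trans h2; rewrite csym.
Qed.
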